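(* Let $Q$ be a restriction quantal frame with identity $e$. Then the maps $A\mapsto A\cap e^{\downarrow}$ and $F\mapsto F^{\uparrow}=\{x\in Q:\exists f\in F,\ f\le x\}$ are mutually inverse order isomorphisms (with respect to inclusion) between the set of identity completely prime filters of $Q$ and the set of completely prime filters of the frame $e^{\downarrow}=\{x\in Q:x\le e\}$.
   Context: A restriction quantal frame is a frame $(Q,\le)$ with associative multiplication distributing over arbitrary joins on both sides, which is a monoid with identity $e$ and carries join-preserving unary operations $a\mapsto a^{\ast}$, $a\mapsto a^{+}$ with values in the set $e^{\downarrow}$ of projections (a commutative subsemigroup of idempotents), fixing projections, with $aa^{\ast}=a$, $a^{+}a=a$, $(ab)^{\ast}=(a^{\ast}b)^{\ast}$, $(ab)^{+}=(ab^{+})^{+}$; the top element is a join of partial isometries ($a$ with $b\le a\Rightarrow b=b^{+}a=ab^{\ast}$) and partial isometries are closed under product. A completely prime filter in a frame (or in $Q$) is a nonempty, upward closed subset closed under binary meets, not containing $0$, such that if $\bigvee_{i\in I}a_i$ belongs to it then some $a_i$ belongs to it. An identity completely prime filter of $Q$ is a completely prime filter of $Q$ containing at least one projection. *)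

(* Defs.v *)
(* Subsets of a carrier are represented as predicates [car -> Prop]. *)

Record RQF := {
  car :> Type;
  le : car -> car -> Prop;
  sup : (car -> Prop) -> car;
  meet : car -> car -> car;
  mul : car -> car -> car;
  e : car;
  star : car -> car;
  plus : car -> car;

  le_refl : forall a, le a a;
  le_trans : forall a b c, le a b -> le b c -> le a c;
  le_antisym : forall a b, le a b -> le b a -> a = b;
  sup_ub : forall (S : car -> Prop) s, S s -> le s (sup S);
  sup_least : forall (S : car -> Prop) u, (forall s, S s -> le s u) -> le (sup S) u;
  meet_lb1 : forall a b, le (meet a b) a;
  meet_lb2 : forall a b, le (meet a b) b;
  meet_greatest : forall a b c, le c a -> le c b -> le c (meet a b);
  meet_sup : forall a (S : car -> Prop),
      meet a (sup S) = sup (fun y => exists s, S s /\ y = meet a s);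
  mul_assoc : forall a b c, mul a (mul b c) = mul (mul a b) c;
  mul_sup_l : forall (S : car -> Prop) b,
      mul (sup S) b = sup (fun y => exists s, S s /\ y = mul s b);
  mul_sup_r : forall a (S : car -> Prop),
      mul a (sup S) = sup (fun y => exists s, S s /\ y = mul a s);
  mul_e_l : forall a, mul e a = a;
  mul_e_r : forall a, mul a e = a;
  proj_idem : forall p, le p e -> mul p p = p;
  proj_comm : forall p q, le p e -> le q e -> mul p q = mul q p;
  star_sup : forall (S : car -> Prop),
      star (sup S) = sup (fun y => exists s, S s /\ y = star s);
  plus_sup : forall (S : car -> Prop),
      plus (sup S) = sup (fun y => exists s, S s /\ y = plus s);
  star_proj : forall a, le (star a) e;
  plus_proj : forall a, le (plus a) e;
  star_fix : forall p, le p e -> star p = p;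
  plus_fix : forall p, le p e -> plus p = p;
  mul_star : forall a, mul a (star a) = a;
  plus_mul : forall a, mul (plus a) a = a;
  star_mul : forall a b, star (mul a b) = star (mul (star a) b);
  plus_mul2 : forall a b, plus (mul a b) = plus (mul a (plus b));
  (* top is a join of partial isometries *)
  top_pi : sup (fun _ => True) =
           sup (fun a => forall b, le b a -> b = mul (plus b) a /\ b = mul a (star b));
  (* partial isometries closed under product *)
  pi_mul : forall a c,
      (forall b, le b a -> b = mul (plus b) a /\ b = mul a (star b)) ->
      (forall b, le b c -> b = mul (plus b) c /\ b = mul c (star b)) ->
      (forall b, le b (mul a c) -> b = mul (plus b) (mul a c) /\ b = mul (mul a c) (star b))
}.

Arguments le {r} _ _.
Arguments sup {r} _.
Arguments meet {r} _ _.
Arguments mul {r} _ _.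
Arguments e {r}.

Definition bot {Q : RQF} : Q := sup (fun _ => False).

Definition cpf (Q : RQF) (A : Q -> Prop) : Prop :=
  (exists a, A a) /\
  (forall a b, A a -> le a b -> A b) /\
  (forall a b, A a -> A b -> A (meet a b)) /\
  ~ A bot /\
  (forall S : Q -> Prop, A (sup S) -> exists s, S s /\ A s).

Definition icpf (Q : RQF) (A : Q -> Prop) : Prop :=
  cpf Q A /\ exists p, A p /\ le p e.

(* completely prime filter of the frame e^down = {x | x <= e}, given as a subset
   F of Q contained in e^down.  Meets, joins and the bottom of e^down coincide
   with those computed in Q (e^down is a down-set). *)
Definition cpf_down (Q : RQF) (F : Q -> Prop) : Prop :=
  (forall x, F x -> le x e) /\
  (exists a, F a) /\
  (forall a b, F a -> le a b -> le b e -> F b) /\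
  (forall a b, F a -> F b -> F (meet a b)) /\
  ~ F bot /\
  (forall S : Q -> Prop, (forall s, S s -> le s e) -> F (sup S) -> exists s, S s /\ F s).

Definition restr (Q : RQF) (A : Q -> Prop) : Q -> Prop :=
  fun x => A x /\ le x e.

Definition upcl (Q : RQF) (F : Q -> Prop) : Q -> Prop :=
  fun x => exists f, F f /\ le f x.

Definition subset {T : Type} (A B : T -> Prop) : Prop := forall x, A x -> B x.
Definition seteq {T : Type} (A B : T -> Prop) : Prop := forall x, A x <-> B x.

(* Main.v *)
Require Import Defs.

Lemma bot_le (Q : RQF) (x : Q) : le bot x.
Proof. unfold bot. apply sup_least. intros s []. Qed.

Lemma meet_sub (Q : RQF) (f x : Q) : le f x -> meet f x = f.
Proof.
  intro H. apply le_antisym. apply meet_lb1.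
  apply meet_greatest. apply le_refl. exact H.
Qed.

Lemma L1 (Q : RQF) A : icpf Q A -> cpf_down Q (restr Q A).
Proof.
  intros [[Hn [Hu [Hm [Hb Hp]]]] [p [Ap pe]]]. unfold restr.
  split; [intros x [_ H]; exact H|].
  split; [exists p; split; assumption|].
  split; [intros a b [Aa _] ab be; split; [eapply Hu; eauto | exact be]|].
  split; [intros a b [Aa ae] [Ab be]; split; [apply Hm; auto | eapply le_trans; [apply meet_lb1|exact ae]]|].
  split; [intros [H _]; exact (Hb H)|].
  intros S HS [H _]. destruct (Hp S H) as [s [Ss As]]. exists s. auto.
Qed.

Lemma L2 (Q : RQF) F : cpf_down Q F -> icpf Q (upcl Q F).
Proof.
  intros [He [[a Fa] [Hu [Hm [Hb Hp]]]]]. unfold upcl. split.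
  - split; [exists a; exists a; split; [exact Fa | apply le_refl]|].
    split; [intros x y [f [Ff fx]] xy; exists f; split; [exact Ff | eapply le_trans; eauto]|].
    split; [intros x y [f [Ff fx]] [g [Fg gy]]; exists (meet f g); split;
      [apply Hm; auto | apply meet_greatest; [eapply le_trans; [apply meet_lb1|exact fx] | eapply le_trans; [apply meet_lb2|exact gy]]]|].
    split.
    + intros [f [Ff fb]]. apply Hb.
      assert (f = bot) by (apply le_antisym; [exact fb | apply bot_le]). subst; exact Ff.
    + intros S [f [Ff fS]].
      assert (fe : le f e) by (apply He; exact Ff).
      rewrite <- (meet_sub Q f (sup S)) in Ff by exact fS.
      rewrite meet_sup in Ff.
      assert (HT : forall y, (exists s, S s /\ y = meet f s) -> le y e).
      { intros y [s [_ ->]]. eapply le_trans; [apply meet_lb1 | exact fe]. }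
      destruct (Hp _ HT Ff)
        as [y [[s [Ss ->]] Fy]].
      exists s. split; [exact Ss|]. exists (meet f s). split; [exact Fy | apply meet_lb2].
  - exists a. split; [exists a; split; [exact Fa | apply le_refl] | apply He; exact Fa].
Qed.

Lemma L3 (Q : RQF) A : icpf Q A -> seteq (upcl Q (restr Q A)) A.
Proof.
  intros [[Hn [Hu [Hm [Hb Hp]]]] [p [Ap pe]]] x. unfold upcl, restr. split.
  - intros [f [[Af _] fx]]. eapply Hu; eauto.
  - intros Ax. exists (meet x p). split; [split; [apply Hm; auto | eapply le_trans; [apply meet_lb2|exact pe]] | apply meet_lb1].
Qed.

Lemma L4 (Q : RQF) F : cpf_down Q F -> seteq (restr Q (upcl Q F)) F.
Proof.
  intros [He [_ [Hu _]]] x. unfold upcl, restr. split.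
  - intros [[f [Ff fx]] xe]. eapply Hu; eauto.
  - intros Fx. split; [exists x; split; [exact Fx | apply le_refl] | apply He; exact Fx].
Qed.

Theorem mainTheorem7 (Q : RQF) :
  (forall A, icpf Q A -> cpf_down Q (restr Q A)) /\
  (forall F, cpf_down Q F -> icpf Q (upcl Q F)) /\
  (forall A, icpf Q A -> seteq (upcl Q (restr Q A)) A) /\
  (forall F, cpf_down Q F -> seteq (restr Q (upcl Q F)) F) /\
  (forall A B, icpf Q A -> icpf Q B ->
     (subset A B <-> subset (restr Q A) (restr Q B))) /\
  (forall F G, cpf_down Q F -> cpf_down Q G ->
     (subset F G <-> subset (upcl Q F) (upcl Q G))).
Proof.
  split; [apply L1|]. split; [apply L2|]. split; [apply L3|]. split; [apply L4|].
  split.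
  - intros A B HA HB. split.
    + intros H x [Ax xe]. split; auto.
    + intros H x Ax. apply (L3 Q B HB). apply (L3 Q A HA) in Ax.
      destruct Ax as [f [Rf fx]]. exists f. split; auto.
  - intros F G HF HG. split.
    + intros H x [f [Ff fx]]. exists f. auto.
    + intros H x Fx. apply (L4 Q G HG). apply (L4 Q F HF) in Fx.
      destruct Fx as [Ux xe]. split; auto.
Qed.
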